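(* Let $L>0$, $J\ge2$ and $\delta t>0$ with $\delta t/\delta x^2\le1/2$, and set $\eta=\max_{1\le\ell\le J-1}|1+\delta t\,\lambda_\ell|$. Then for all $n\ge1$, $\delta t\sum_{k=0}^{n-1}\eta^k\le 2L^2$.
   Context: $\delta x=L/(J-1)$, $\lambda_\ell=-\frac4{\delta x^2}\sin^2\big(\frac{\ell\pi}{2J}\big)$ for $0\le\ell\le J-1$. *)

(* Defs.v *)
From Stdlib Require Import Reals Lra Lia List.
Open Scope R_scope.

Definition dx (L : R) (J : nat) : R := L / INR (J - 1).

Definition lambda (L : R) (J l : nat) : R :=
  - (4 / (dx L J) ^ 2) * (sin (INR l * PI / (2 * INR J))) ^ 2.

(* eta = max_{1 <= l <= J-1} |1 + dt * lambda_l|.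
   The list seq 1 (J-1) = [1; ...; J-1]; all entries are >= 0, so folding
   Rmax with initial value 0 computes the maximum (list nonempty for J >= 2). *)
Definition eta (L dt : R) (J : nat) : R :=
  fold_right Rmax 0
    (map (fun l => Rabs (1 + dt * lambda L J l)) (seq 1 (J - 1))).

(* Main.v *)
Require Import Defs.
From Stdlib Require Import Reals.
From Stdlib Require Import Lra Lia List.
Open Scope R_scope.
Lemma sin_lower a : 0 < a -> a <= 1 -> 4/5 * a <= sin a.
Proof.
  intros H0 H1.
  assert (Hpi := PI2_1).
  destruct (SIN a) as [H _]; try lra.
  eapply Rle_trans; [|exact H].
  unfold sin_lb, sin_approx, sin_term. simpl sum_f_R0.
  replace (INR (Factorial.fact (2*0+1))) with 1 by (simpl; lra).
  replace (INR (Factorial.fact (2*1+1))) with 6 by (simpl; lra).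
  replace (INR (Factorial.fact (2*2+1))) with 120 by (simpl; lra).
  replace (INR (Factorial.fact (2*3+1))) with 5040 by (simpl; lra).
  simpl.
  assert (0 <= a*a <= 1) by nra.
  assert (0 <= a*a*a*a <= 1) by nra.
  assert (0 <= a*a*a*a*a*a <= 1) by nra.
  nra.
Qed.

Lemma fold_max_le (l : list R) B : 0 <= B -> (forall x, In x l -> x <= B) ->
  fold_right Rmax 0 l <= B.
Proof.
  induction l as [|x l IH]; simpl; intros HB H; [lra|].
  apply Rmax_lub; auto.
Qed.

Lemma fold_max_ge0 (l : list R) : 0 <= fold_right Rmax 0 l.
Proof.
  induction l as [|x l IH]; simpl; [lra|].
  eapply Rle_trans; [exact IH| apply Rmax_r].
Qed.

Lemma geom_bound q c N : 0 < c -> 0 <= q -> q <= 1 - c ->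
  sum_f_R0 (fun k => q ^ k) N <= 1 / c.
Proof.
  intros Hc Hq Hqc.
  rewrite tech3 by lra.
  assert (0 <= q ^ S N) by (apply pow_le; lra).
  apply Rle_trans with (1 / (1 - q)).
  - unfold Rdiv. apply Rmult_le_compat_r.
    + left; apply Rinv_0_lt_compat; lra.
    + lra.
  - apply Rmult_le_compat_l; [lra|].
    apply Rinv_le_contravar; lra.
Qed.

(* sum_f_R0 f (n-1) = f 0 + ... + f (n-1), i.e. n terms. *)
Theorem proposition3p3 (L dt : R) (J : nat) :
  0 < L -> (2 <= J)%nat -> 0 < dt -> dt / (dx L J) ^ 2 <= 1 / 2 ->
  forall n : nat, (1 <= n)%nat ->
    dt * sum_f_R0 (fun k => (eta L dt J) ^ k) (n - 1) <= 2 * L ^ 2.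
Proof.
  intros HL HJ Hdt Hr n Hn.
  assert (Hpi := PI2_1). assert (Hpi4 := PI_4).
  set (m := INR (J - 1)).
  assert (Hm : 1 <= m) by (unfold m; apply (le_INR 1); lia).
  assert (HJm : INR J = m + 1) by (unfold m; rewrite <- S_INR; f_equal; lia).
  set (h := dx L J).
  assert (Hh : h = L / m) by reflexivity.
  assert (Hhpos : 0 < h) by (rewrite Hh; apply Rdiv_lt_0_compat; lra).
  set (r := dt / h ^ 2).
  assert (Hrpos : 0 < r) by (unfold r; apply Rdiv_lt_0_compat; [lra| apply pow_lt; lra]).
  set (a := PI / (2 * INR J)).
  assert (Ha0 : 0 < a) by (unfold a; apply Rdiv_lt_0_compat; lra).
  assert (HaJ : a * INR J = PI / 2) by (unfold a; field; lra).
  assert (Ha1 : a <= 1).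
  { unfold a. apply Rle_trans with (PI / 4).
    - unfold Rdiv. apply Rmult_le_compat_l; [lra|]. apply Rinv_le_contravar; lra.
    - lra. }
  set (s1 := sin a).
  assert (Hs1 : 4/5 * a <= s1) by (apply sin_lower; lra).
  assert (Hs1J : 4/5 * (PI/2) <= s1 * INR J).
  { rewrite <- HaJ. assert (0 < INR J) by lra. nra. }
  set (c := 4 * r * s1 ^ 2).
  assert (Hkey : forall l, (1 <= l <= J - 1)%nat ->
            Rabs (1 + dt * lambda L J l) <= 1 - c).
  { intros l Hl.
    assert (Hl1 : 1 <= INR l) by (apply (le_INR 1); lia).
    assert (HlJ : INR l + 1 <= INR J) by (rewrite <- S_INR; apply le_INR; lia).
    set (sl := sin (INR l * PI / (2 * INR J))).
    assert (Hxl : INR l * PI / (2 * INR J) = INR l * a) by (unfold a; field; lra).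
    assert (Hlam : dt * lambda L J l = - (4 * r) * sl ^ 2).
    { unfold lambda, r. fold h. fold sl. field. lra. }
    assert (Hla : INR l * a <= PI / 2 - a) by nra.
    assert (Hla1 : a <= INR l * a) by nra.
    assert (Hsl : s1 <= sl).
    { unfold sl, s1. rewrite Hxl. apply sin_incr_1; lra. }
    assert (Hs1pos : 0 <= s1).
    { unfold s1. apply sin_ge_0; lra. }
    assert (Hcos : s1 <= cos (INR l * a)).
    { rewrite <- sin_shift. unfold s1. apply sin_incr_1; lra. }
    assert (Hsum : sl ^ 2 + s1 ^ 2 <= 1).
    { assert (E := sin2_cos2 (INR l * a)). unfold Rsqr in E.
      unfold sl. rewrite Hxl. nra. }
    rewrite Hlam. apply Rabs_le. unfold c.
    assert (s1 ^ 2 <= sl ^ 2) by nra.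
    assert (r * (sl ^ 2 + s1 ^ 2) <= r * 1) by (apply Rmult_le_compat_l; lra).
    assert (r * (s1 ^ 2) <= r * sl ^ 2) by (apply Rmult_le_compat_l; lra).
    assert (r <= 1/2) by (unfold r; fold h in Hr; lra).
    split; lra. }
  assert (Hc : 0 < c).
  { unfold c. assert (0 < s1) by nra. apply Rmult_lt_0_compat; [lra|]. apply pow_lt; lra. }
  assert (Heta : eta L dt J <= 1 - c).
  { unfold eta. apply fold_max_le.
    - assert (Hk := Hkey 1%nat ltac:(lia)). assert (0 <= Rabs (1 + dt * lambda L J 1)) by apply Rabs_pos. lra.
    - intros x Hx. apply in_map_iff in Hx. destruct Hx as [l [<- Hl]].
      apply in_seq in Hl. apply Hkey. lia. }
  assert (Hgeo := geom_bound (eta L dt J) c (n - 1) Hc (fold_max_ge0 _) Heta).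
  apply Rle_trans with (dt * (1 / c)).
  { apply Rmult_le_compat_l; lra. }
  (* dt / c = h^2 / (4 s1^2) *)
  assert (Hs1p : 0 < s1) by nra.
  replace (dt * (1 / c)) with (L ^ 2 / (4 * (s1 * m) ^ 2)).
  2:{ unfold c, r. rewrite Hh. field. repeat split; lra. }
  assert (Hsm : 2 / 5 <= s1 * m).
  { assert (s1 * INR J >= 4/5) by nra. rewrite HJm in H. nra. }
  apply Rle_trans with (L ^ 2 / (4 * (2/5) ^ 2)).
  - unfold Rdiv. apply Rmult_le_compat_l; [apply pow2_ge_0|].
    apply Rinv_le_contravar; [lra|]. apply Rmult_le_compat_l; [lra|].
    apply pow_incr; lra.
  - assert (0 <= L^2) by apply pow2_ge_0. lra.
Qed.
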